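(* Let $S$ be a nonempty set of places of $\mathbb{Q}$, let $F$ be a number field, and let $T=M_F(S)$. Then the restriction map $\rho:\mathcal J^*(\mathbb{Q},S)\to\mathcal J^*(F,T)$, $\rho(c)=c|_{\mathcal J(F,T)}$, is a vector space isomorphism.
   Context: All fields lie in a fixed algebraic closure $\overline{\mathbb{Q}}$. For a number field $F$, a nonempty set $S$ of places of $F$, and a finite extension $K$ of $F$, $M_K(S)$ denotes the set of places of $K$ dividing a place in $S$. Define $\mathcal J(F,S)=\{(K,v): K\supseteq F,\ [K:F]<\infty,\ v\in M_K(S)\}$. A map $c:\mathcal J(F,S)\to\mathbb{R}$ is consistent if $c(K,v)=\sum_{w\mid v}c(L,w)$ for all $(K,v)\in\mathcal J(F,S)$ and all finite extensions $L/K$, the sum running over places $w$ of $L$ dividing $v$. $\mathcal J^*(F,S)$ is the real vector space of consistent maps $\mathcal J(F,S)\to\mathbb{R}$ under pointwise addition and scalar multiplication. *)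

(* Defs.v *)
(* All fields are subfields of algC, MathComp's algebraic closure of Q
   (every element of algC is algebraic over Q). *)
From HB Require Import structures.
From mathcomp Require Import all_boot all_order all_algebra algC.
From mathcomp Require Import all_classical all_reals exp.
Set Implicit Arguments. Unset Strict Implicit. Unset Printing Implicit Defensive.
Import Order.TTheory GRing.Theory Num.Theory.
Local Open Scope classical_set_scope.
Local Open Scope ring_scope.

Section Places.
Variable R : realType.

Definition Qfield : set algC := [set x | x \in Crat].

Definition is_subfield (K : set algC) : Prop :=
  [/\ K 0, K 1,
      (forall x y, K x -> K y -> K (x - y)),
      (forall x y, K x -> K y -> K (x * y)) &
      (forall x, K x -> x != 0 -> K x^-1)].

Definition number_field (K : set algC) : Prop :=
  is_subfield K /\
  exists s : seq algC, (forall i, (i < size s)%N -> K s`_i) /\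
    forall x, K x -> exists r : seq algC,
      [/\ size r = size s, all (fun q => q \in Crat) r &
          x = \sum_(i < size s) r`_i * s`_i].

(* b is an absolute value on K (only the values on K matter). *)
Definition absval (K : set algC) (b : algC -> R) : Prop :=
  [/\ (forall x, K x -> 0 <= b x),
      (forall x, K x -> (b x = 0 <-> x = 0)),
      (forall x y, K x -> K y -> b (x * y) = b x * b y) &
      (forall x y, K x -> K y -> b (x + y) <= b x + b y)].

Definition nontrivial_abs (K : set algC) (b : algC -> R) : Prop :=
  exists x, K x /\ x != 0 /\ b x != 1.

Definition abs_equiv (K : set algC) (a b : algC -> R) : Prop :=
  exists s : R, 0 < s /\ forall x, K x -> b x = a x `^ s.

Definition is_place (K : set algC) (v : set (algC -> R)) : Prop :=
  exists a, [/\ absval K a, nontrivial_abs K a &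
    v = [set b | absval K b /\ abs_equiv K a b]].

(* For K ⊆ L, a place w of L place_divides (lies above) a place v of K iff
   the restriction to K of (a representative of) w lies in the class v. *)
Definition place_divides (w v : set (algC -> R)) : Prop := exists b, w b /\ v b.

Definition M_ (K : set algC) (S : set (set (algC -> R))) : set (set (algC -> R)) :=
  [set w | is_place K w /\ exists v, S v /\ place_divides w v].

Definition inJ (F : set algC) (S : set (set (algC -> R)))
    (p : set algC * set (algC -> R)) : Prop :=
  [/\ number_field p.1, F `<=` p.1 & M_ p.1 S p.2].

Definition JFS (F : set algC) (S : set (set (algC -> R))) :=
  {p : set algC * set (algC -> R) | inJ F S p}.

(* Extension by 0 of a map on J(F,S) to all pairs (only used on J). *)
Definition extJ F S (c : JFS F S -> R) (K : set algC) (w : set (algC -> R)) : R :=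
  match pselect (inJ F S (K, w)) with
  | left h => c (exist _ (K, w) h)
  | right _ => 0
  end.

Definition consistent F S (c : JFS F S -> R) : Prop :=
  forall (x : JFS F S) (L : set algC), number_field L -> (sval x).1 `<=` L ->
    c x = (\sum_(w \in [set w | is_place L w /\ place_divides w (sval x).2])
              extJ c L w)%R.

Definition rho_restrict (S : set (set (algC -> R))) (F : set algC)
    (c : JFS Qfield S -> R) : JFS F (M_ F S) -> R :=
  fun y => extJ c (sval y).1 (sval y).2.

End Places.

(* Main.v *)
Require Import Defs.
From HB Require Import structures.
From mathcomp Require Import all_boot all_order all_algebra algC.
From mathcomp Require Import all_classical all_reals exp.
From mathcomp Require Import vector falgebra fieldext algnum finmap lra.
Import Order.TTheory GRing.Theory Num.Theory.
Local Open Scope classical_set_scope.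
Local Open Scope ring_scope.
Set Implicit Arguments. Unset Strict Implicit. Unset Printing Implicit Defensive.
Section Basics.
Variable R : realType.
Implicit Types (K L : set algC) (a b : algC -> R).

Lemma sf0 K : is_subfield K -> K 0. Proof. by case. Qed.
Lemma sf1 K : is_subfield K -> K 1. Proof. by case. Qed.
Lemma sfB K x y : is_subfield K -> K x -> K y -> K (x - y).
Proof. by case=> _ _ h _ _; apply: h. Qed.
Lemma sfM K x y : is_subfield K -> K x -> K y -> K (x * y).
Proof. by case=> _ _ _ h _; apply: h. Qed.
Lemma sfV K x : is_subfield K -> K x -> K x^-1.
Proof.
move=> hK kx; have [->|nz] := eqVneq x 0; first by rewrite invr0; apply: sf0.
by case: hK => _ _ _ _ h; apply: h.
Qed.
Lemma sfN K x : is_subfield K -> K x -> K (- x).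
Proof. by move=> hK kx; rewrite -sub0r; apply: sfB => //; apply: sf0. Qed.
Lemma sfD K x y : is_subfield K -> K x -> K y -> K (x + y).
Proof. by move=> hK kx ky; rewrite -[y]opprK; apply: sfB => //; apply: sfN. Qed.
Lemma sfdiv K x y : is_subfield K -> K x -> K y -> K (x / y).
Proof. by move=> hK kx ky; apply: sfM => //; apply: sfV. Qed.
Lemma sfX K x n : is_subfield K -> K x -> K (x ^+ n).
Proof.
move=> hK kx; elim: n => [|n IH]; first by rewrite expr0; apply: sf1.
by rewrite exprS; apply: sfM.
Qed.
Lemma sfXz K x (z : int) : is_subfield K -> K x -> K (x ^ z).
Proof.
move=> hK kx; case: z => n; first exact: sfX.
by change (K (x ^+ n.+1)^-1); apply: sfV => //; apply: sfX.
Qed.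
Lemma sfsum K (I : Type) (r : seq I) (P : pred I) (F : I -> algC) :
  is_subfield K -> (forall i, P i -> K (F i)) -> K (\sum_(i <- r | P i) F i).
Proof.
move=> hK hF; elim: r => [|i r IH]; first by rewrite big_nil; apply: sf0.
rewrite big_cons; case: ifP => // Pi; apply: sfD => //; exact: hF.
Qed.
Lemma sfnat K n : is_subfield K -> K n%:R.
Proof.
move=> hK; elim: n => [|n IH]; first by apply: sf0.
by rewrite -addn1 natrD; apply: sfD => //; apply: sf1.
Qed.
Lemma sfint K (z : int) : is_subfield K -> K z%:~R.
Proof.
move=> hK; case: z => n; first by apply: sfnat.
by rewrite NegzE mulrNz; apply: sfN => //; apply: sfnat.
Qed.
Lemma sfrat K (q : rat) : is_subfield K -> K (ratr q).
Proof.
move=> hK; rewrite -[q]divq_num_den fmorph_div !rmorph_int.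
by apply: sfdiv => //; apply: sfint.
Qed.
Lemma sfQ K : is_subfield K -> Qfield `<=` K.
Proof. by move=> hK x /= /CratP [q ->]; apply: sfrat. Qed.
Lemma sfQQ : is_subfield Qfield.
Proof.
split; rewrite /Qfield /=; [exact: rpred0|exact: rpred1| | | ].
- by move=> x y hx hy; apply: rpredB.
- by move=> x y hx hy; apply: rpredM.
- by move=> x hx _; rewrite /= rpredV.
Qed.

Section Abs.
Variables (K : set algC) (b : algC -> R).
Hypotheses (hK : is_subfield K) (hb : absval K b).

Lemma ab_ge0 x : K x -> 0 <= b x. Proof using hK hb. by case: hb => h _ _ _; apply: h. Qed.
Lemma ab_eq0 x : K x -> (b x = 0 <-> x = 0). Proof using hK hb. by case: hb => _ h _ _; apply: h. Qed.
Lemma abM x y : K x -> K y -> b (x * y) = b x * b y.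
Proof using hK hb. by case: hb => _ _ h _; apply: h. Qed.
Lemma abD x y : K x -> K y -> b (x + y) <= b x + b y.
Proof using hK hb. by case: hb => _ _ _ h; apply: h. Qed.
Lemma ab0 : b 0 = 0. Proof using hK hb. by apply/(ab_eq0 (sf0 hK)). Qed.
Lemma ab_neq0 x : K x -> x != 0 -> b x != 0.
Proof using hK hb. by move=> kx; apply: contra_neq => /(ab_eq0 kx). Qed.
Lemma ab_gt0 x : K x -> x != 0 -> 0 < b x.
Proof using hK hb. by move=> kx nz; rewrite lt_def ab_neq0 // ab_ge0. Qed.
Lemma ab1 : b 1 = 1.
Proof using hK hb.
have k1 := sf1 hK.
have h : b 1 * b 1 = b 1 * 1 by rewrite -abM // mulr1 mulr1.
by apply: (mulfI (ab_neq0 k1 (oner_neq0 _))).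
Qed.
Lemma abN1 : b (-1) = 1.
Proof using hK hb.
have k1 := sfN hK (sf1 hK).
have : b (-1) ^+ 2 == 1 by rewrite expr2 -abM // mulrNN mulr1 ab1.
rewrite sqrf_eq1 => /orP[/eqP //|/eqP h].
by have := ab_ge0 k1; rewrite h ler0N1.
Qed.
Lemma abN x : K x -> b (- x) = b x.
Proof using hK hb. by move=> kx; rewrite -mulN1r abM ?abN1 ?mul1r //; exact: sfN hK (sf1 hK). Qed.
Lemma abV x : K x -> b x^-1 = (b x)^-1.
Proof using hK hb.
move=> kx; have [->|nz] := eqVneq x 0; first by rewrite invr0 ab0 invr0.
have h : b x * b x^-1 = 1 by rewrite -abM ?divff ?ab1 //; apply: sfV.
by rewrite -[LHS]mul1r -(mulVf (ab_neq0 kx nz)) -mulrA h mulr1.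
Qed.
Lemma abdiv x y : K x -> K y -> b (x / y) = b x / b y.
Proof using hK hb. by move=> kx ky; rewrite abM ?abV //; apply: sfV. Qed.
Lemma abX x n : K x -> b (x ^+ n) = b x ^+ n.
Proof using hK hb.
move=> kx; elim: n => [|n IH]; first by rewrite !expr0 ab1.
by rewrite !exprS abM ?IH //; apply: sfX.
Qed.
Lemma abXz x (z : int) : K x -> b (x ^ z) = b x ^ z.
Proof using hK hb.
move=> kx; case: z => n; first exact: abX.
by change (b (x ^+ n.+1)^-1 = (b x ^+ n.+1)^-1); rewrite abV ?abX //; apply: sfX.
Qed.
Lemma abB x y : K x -> K y -> b x <= b (x + y) + b y.
Proof using hK hb.
move=> kx ky; have h := abD (sfD hK kx ky) (sfN hK ky).
by rewrite addrK (abN ky) in h.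
Qed.
Lemma absum (I : Type) (r : seq I) (P : pred I) (F : I -> algC) :
  (forall i, P i -> K (F i)) ->
  b (\sum_(i <- r | P i) F i) <= \sum_(i <- r | P i) b (F i).
Proof using hK hb.
move=> hF; elim: r => [|i r IH]; first by rewrite !big_nil ab0.
rewrite !big_cons; case: ifP => // Pi.
have h2 : K (\sum_(j <- r | P j) F j) by apply: sfsum.
by apply: le_trans (abD (hF i Pi) h2) _; rewrite lerD2l.
Qed.
End Abs.

Lemma absval_sub K L b : K `<=` L -> absval L b -> absval K b.
Proof.
move=> KL [h1 h2 h3 h4]; split.
- by move=> x kx; apply: h1; apply: KL.
- by move=> x kx; apply: h2; apply: KL.
- by move=> x y kx ky; apply: h3; apply: KL.
- by move=> x y kx ky; apply: h4; apply: KL.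
Qed.
Lemma equiv_sub K L a b : K `<=` L -> abs_equiv L a b -> abs_equiv K a b.
Proof. by move=> KL [s [s0 h]]; exists s; split => // x kx; apply: h; apply: KL. Qed.
Lemma equiv_refl K a : absval K a -> abs_equiv K a a.
Proof.
move=> ha; exists 1; split => // x kx; rewrite powRr1 //.
by case: ha => h _ _ _; apply: h.
Qed.
Lemma equiv_sym K a b : absval K a -> abs_equiv K a b -> abs_equiv K b a.
Proof.
move=> ha [s [s0 h]]; exists s^-1; split; first by rewrite invr_gt0.
move=> x kx; rewrite h // -powRrM divff ?gt_eqF // powRr1 //.
by case: ha => h' _ _ _; apply: h'.
Qed.
Lemma equiv_trans K a b c : abs_equiv K a b -> abs_equiv K b c -> abs_equiv K a c.
Proof.
move=> [s [s0 h]] [t [t0 h']]; exists (s * t); split; first exact: mulr_gt0.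
by move=> x kx; rewrite h' // h // powRrM.
Qed.
Lemma nontriv_equiv K a b : absval K a -> abs_equiv K a b ->
  nontrivial_abs K a -> nontrivial_abs K b.
Proof.
move=> ha [s [s0 h]] [x [kx [nz ax]]]; exists x; split => //; split => //.
rewrite h // powR_eq1 (negbTE ax) (gt_eqF s0) orbF.
by rewrite -leNgt; case: ha => h' _ _ _; apply: h'.
Qed.

Definition cls K b := [set b' | absval K b' /\ abs_equiv K b b'].

Lemma place_abs K v b : is_place K v -> v b -> absval K b.
Proof. by move=> [a [_ _ ->]] []. Qed.
Lemma place_equiv K v b1 b2 : is_place K v -> v b1 -> v b2 -> abs_equiv K b1 b2.
Proof.
move=> [a [ha _ ->]] [_ e1] [_ e2].
by apply: equiv_trans e2; apply: equiv_sym.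
Qed.
Lemma place_mem K v b1 b2 : is_place K v -> v b1 -> absval K b2 ->
  abs_equiv K b1 b2 -> v b2.
Proof.
move=> [a [ha _ ->]] [_ e1] h2 e; split => //; exact: equiv_trans e.
Qed.
Lemma place_eq K u1 u2 b1 b2 : is_place K u1 -> is_place K u2 -> u1 b1 -> u2 b2 ->
  abs_equiv K b1 b2 -> u1 = u2.
Proof.
move=> p1 p2 h1 h2 e.
have ab1 := place_abs p1 h1; have ab2 := place_abs p2 h2.
apply/seteqP; split => c hc.
- apply: (place_mem p2 h2 (place_abs p1 hc)).
  apply: equiv_trans (place_equiv p1 h1 hc); exact: equiv_sym.
- apply: (place_mem p1 h1 (place_abs p2 hc)).
  exact: equiv_trans (place_equiv p2 h2 hc).
Qed.
Lemma place_nontriv K v b : is_place K v -> v b -> nontrivial_abs K b.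
Proof. by move=> [a [ha nt ->]] [_ e]; apply: nontriv_equiv e nt. Qed.
Lemma cls_place K b : absval K b -> nontrivial_abs K b ->
  is_place K (cls K b) /\ cls K b b.
Proof.
move=> hb nt; split; first by exists b.
by split => //; apply: equiv_refl.
Qed.
End Basics.
Section Real.
Variable R : realType.

Lemma bernoulli (h : R) n : 0 <= h -> 1 + n%:R * h <= (1 + h) ^+ n.
Proof.
move=> h0; elim: n => [|n IH]; first by rewrite mul0r addr0 expr0.
rewrite exprS; apply: le_trans (_ : (1 + h) * (1 + n%:R * h) <= _); last first.
  rewrite ler_pM2l ?IH //; apply: lt_le_trans (@ltr01 R) _; by rewrite lerDl.
have : 0 <= h * (n%:R * h) by rewrite mulr_ge0 // mulr_ge0.
rewrite -natr1; lra.
Qed.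

Lemma pow_large (M c : R) : 1 < c -> exists N, forall r, (N <= r)%N -> M < c ^+ r.
Proof.
move=> c1; set h := c - 1; have h0 : 0 < h by rewrite subr_gt0.
have x0 : 0 <= `|M| / h by rewrite divr_ge0 // ltW.
exists (Num.Def.archi_bound (`|M| / h)) => r Nr.
have hb := archi_boundP x0.
have hc : c = 1 + h by rewrite /h addrC subrK.
apply: le_lt_trans (ler_norm M) _.
apply: lt_le_trans (_ : 1 + r%:R * h <= _); last by rewrite hc; apply: bernoulli; apply: ltW.
apply: lt_le_trans (_ : r%:R * h <= _); last by rewrite lerDr.
rewrite -ltr_pdivrMr //; apply: lt_le_trans hb _.
by rewrite ler_nat.
Qed.

Lemma pow_small (c e : R) : 0 <= c < 1 -> 0 < e ->
  exists N, forall r, (N <= r)%N -> c ^+ r < e.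
Proof.
move=> /andP[c0 c1] e0; have [->|cn0] := eqVneq c 0.
  by exists 1%N => r r1; rewrite expr0n; case: r r1 => //.
have cp : 0 < c by rewrite lt_def cn0.
have c1' : 1 < c^-1 by rewrite invf_gt1.
have [N hN] := pow_large (e^-1) c1'.
exists N => r Nr; have := hN r Nr; rewrite exprVn.
by rewrite ltf_pV2 // ?posrE ?exprn_gt0 // invr_gt0.
Qed.

Lemma ev_all (m : nat) (P : nat -> nat -> Prop) :
  (forall j, (j < m)%N -> exists N, forall r, (N <= r)%N -> P j r) ->
  exists N, forall j r, (j < m)%N -> (N <= r)%N -> P j r.
Proof.
elim: m => [|m IH] h; first by exists 0%N.
have [N1 h1] := IH (fun j jm => h j (ltnW jm)).
have [N2 h2] := h m (ltnSn m).
exists (maxn N1 N2) => j r; rewrite ltnS leq_eqVlt => /orP[/eqP ->|jm] Nr.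
  by apply: h2; apply: leq_trans Nr; apply: leq_maxr.
by apply: h1 => //; apply: leq_trans Nr; apply: leq_maxl.
Qed.

Lemma ev_and (P Q : nat -> Prop) :
  (exists N, forall r, (N <= r)%N -> P r) -> (exists N, forall r, (N <= r)%N -> Q r) ->
  exists N, forall r, (N <= r)%N -> P r /\ Q r.
Proof.
move=> [N1 h1] [N2 h2]; exists (maxn N1 N2) => r Nr; split.
  by apply: h1; apply: leq_trans Nr; apply: leq_maxl.
by apply: h2; apply: leq_trans Nr; apply: leq_maxr.
Qed.

Lemma ln_exprz (t : R) (z : int) : 0 < t -> ln (t ^ z) = z%:~R * ln t.
Proof.
move=> t0; case: z => n.
  by rewrite /= lnXn // -mulr_natl.
change (ln (t ^+ n.+1)^-1 = (Negz n)%:~R * ln t).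
rewrite lnV ?posrE ?exprn_gt0 // lnXn // NegzE mulrNz mulNr -mulr_natl.
by rewrite pmulrn.
Qed.

Lemma ratr_split (q : rat) : (ratr q : R) = (numq q)%:~R / (denq q)%:~R.
Proof. by []. Qed.

End Real.
Section Sep.
Variable R : realType.

Lemma lt_frac (a c z w : R) : 0 < z -> 0 < w -> (a / z < c / w) = (a * w < c * z).
Proof. by move=> z0 w0; rewrite ltr_pdivrMr // mulrAC ltr_pdivlMr. Qed.

Variables (L : set algC).
Hypothesis (hL : is_subfield L).

Lemma big_elem (b : algC -> R) : absval L b -> nontrivial_abs L b ->
  exists y, L y /\ 1 < b y.
Proof.
move=> hb [x [kx [nz bx]]].
have bp := ab_gt0 hL hb kx nz.
have [lt|ge] := ltP (b x) 1.
  exists x^-1; split; first exact: sfV.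
  by rewrite (abV hL hb kx) invf_gt1.
by exists x; split => //; rewrite lt_neqAle eq_sym bx.
Qed.

Lemma lt1_ln (b : algC -> R) e : absval L b -> L e -> e != 0 ->
  (b e < 1) = (ln (b e) < 0).
Proof.
move=> hb le nz; rewrite -ln1 ltr_ln // posrE //; exact (ab_gt0 hL hb le nz).
Qed.

Section Inner.
Variables (b1 b2 : algC -> R).
Hypotheses (h1 : absval L b1) (h2 : absval L b2).

Lemma equiv_of_lt1 : nontrivial_abs L b1 ->
  (forall x, L x -> b1 x < 1 -> b2 x < 1) -> abs_equiv L b1 b2.
Proof.
move=> nt H.
have [y [ly by1]] := big_elem h1 nt.
have ynz : y != 0 by apply: contraTneq by1 => ->; rewrite (ab0 hL h1) ltr10.
have b1y0 := ab_gt0 hL h1 ly ynz; have b2y0 := ab_gt0 hL h2 ly ynz.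
have b2y : 1 < b2 y.
  have := H _ (sfV hL ly); rewrite (abV hL h1 ly) (abV hL h2 ly) !invf_lt1 //.
  by apply.
set l1 := ln (b1 y); set l2 := ln (b2 y).
have l1p : 0 < l1 by apply: ln_gt0.
have l2p : 0 < l2 by apply: ln_gt0.
exists (l2 / l1); split; first by rewrite divr_gt0.
move=> x lx; have [->|xnz] := eqVneq x 0.
  by rewrite (ab0 hL h1) (ab0 hL h2) powR0 // gt_eqF // divr_gt0.
have b1x := ab_gt0 hL h1 lx xnz; have b2x := ab_gt0 hL h2 lx xnz.
set u1 := ln (b1 x); set u2 := ln (b2 x).
have key : forall p q : int, q%:~R * u1 - p%:~R * l1 < 0 -> q%:~R * u2 - p%:~R * l2 < 0.
  move=> p q; set e := x ^ q / y ^ p.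
  have le : L e by apply: (sfdiv hL); apply: (sfXz _ hL).
  have enz : e != 0 by rewrite mulf_neq0 ?invr_eq0 ?expfz_neq0.
  have lnb (b : algC -> R) : absval L b -> 0 < b x -> 0 < b y ->
      ln (b e) = q%:~R * ln (b x) - p%:~R * ln (b y).
    move=> hb bx0 by0; rewrite (abdiv hL hb) ?(abXz hL hb) //; try by apply: (sfXz _ hL).
    by rewrite ln_div ?posrE ?exprz_gt0 // !ln_exprz.
  rewrite -(lnb _ h1) // -(lnb _ h2) // -!lt1_ln //; exact: H.
have key1 : forall p q : int, u1 * q%:~R < p%:~R * l1 -> u2 * q%:~R < p%:~R * l2.
  move=> p q; rewrite -subr_lt0 [u1 * _]mulrC => /key.
  by rewrite subr_lt0 mulrC.
have key2 : forall p q : int, p%:~R * l1 < u1 * q%:~R -> p%:~R * l2 < u2 * q%:~R.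
  move=> p q h; have := key1 (- p) (- q).
  rewrite !mulrNz !mulrN !mulNr !ltrN2; apply; exact: h.
have hab : u1 / l1 = u2 / l2.
  have [lt|gt|//] := ltgtP (u1 / l1) (u2 / l2).
  - have [r] := rat_in_itvoo lt; rewrite in_itv /= !ratr_split => /andP[].
    have dp : 0 < ((denq r)%:~R : R) by rewrite ltr0z denq_gt0.
    rewrite !lt_frac // => /key1 h h'; have := lt_trans h h'; by rewrite lt_irreflexive.
  - have [r] := rat_in_itvoo gt; rewrite in_itv /= !ratr_split => /andP[].
    have dp : 0 < ((denq r)%:~R : R) by rewrite ltr0z denq_gt0.
    rewrite !lt_frac // => h /key2 h'; have := lt_trans h h'; by rewrite lt_irreflexive.
rewrite /powR gt_eqF // -[LHS]lnK ?posrE //; f_equal.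
change (u2 = l2 / l1 * u1).
have -> : u2 = u1 / l1 * l2 by rewrite hab divfK ?gt_eqF.
by rewrite mulrAC [RHS]mulrAC [u1 * l2]mulrC.
Qed.

End Inner.

Lemma separate (b1 b2 : algC -> R) : absval L b1 -> absval L b2 -> nontrivial_abs L b1 -> nontrivial_abs L b2 ->
  ~ abs_equiv L b1 b2 -> exists x, [/\ L x, 1 < b1 x & b2 x < 1].
Proof.
move=> h1 h2 nt1 nt2 ne.
have [x [lx bx1 bx2]] : exists x, [/\ L x, b1 x < 1 & 1 <= b2 x].
  apply: contra_notP ne => hn; apply: equiv_of_lt1 => // x lx bx.
  by rewrite ltNge; apply/negP => bx'; apply: hn; exists x.
have [y [ly by2 by1]] : exists y, [/\ L y, b2 y < 1 & 1 <= b1 y].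
  apply: contra_notP ne => hn.
  have e : abs_equiv L b2 b1.
    apply: equiv_of_lt1 => // z lz bz.
    by rewrite ltNge; apply/negP => bz'; apply: hn; exists z.
  exact: equiv_sym e.
have xnz : x != 0 by apply: contraTneq bx2 => ->; rewrite (ab0 hL h2) ler10.
have b1x := ab_gt0 hL h1 lx xnz; have b2x := ab_gt0 hL h2 lx xnz.
exists (y / x); split; first exact: sfdiv.
- rewrite (abdiv hL h1) // ltr_pdivlMr // mul1r; exact: lt_le_trans bx1 by1.
- rewrite (abdiv hL h2) // ltr_pdivrMr // mul1r; exact: lt_le_trans by2 bx2.
Qed.
End Sep.
Section AW.
Variable R : realType.
Lemma inv_lt (t c : R) : 0 < c -> (c^-1 < t) = (1 < t * c).
Proof. by move=> c0; rewrite -[c^-1]mul1r ltr_pdivrMr. Qed.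
Lemma lt_inv (t c : R) : 0 < c -> (t < c^-1) = (t * c < 1).
Proof. by move=> c0; rewrite -[c^-1]mul1r ltr_pdivlMr. Qed.
Lemma lt1_mul (a c : R) : 1 <= a -> 1 < c -> 1 < a * c.
Proof. move=> h1 h2; nra. Qed.
Lemma mul_lt1 (a c : R) : 0 <= a -> a <= 1 -> 0 <= c -> c < 1 -> a * c < 1.
Proof. move=> h1 h2 h3 h4; nra. Qed.

Variables (L : set algC).
Hypothesis (hL : is_subfield L).

Lemma AW (b : nat -> (algC -> R)) (i0 m : nat) :
  (forall j, (j < m)%N || (j == i0) -> absval L (b j)) ->
  (exists x, L x /\ 1 < b i0 x) ->
  (forall j, (j < m)%N -> j != i0 -> exists x, [/\ L x, 1 < b i0 x & b j x < 1]) ->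
  exists x, [/\ L x, 1 < b i0 x & forall j, (j < m)%N -> j != i0 -> b j x < 1].
Proof.
elim: m => [|m IH] hab hx0 hsep.
  by have [x [lx bx]] := hx0; exists x; split.
have [z [lz bz0 bzj]] : exists z, [/\ L z, 1 < b i0 z & forall j, (j < m)%N -> j != i0 -> b j z < 1].
  apply: IH => //.
  - by move=> j /orP[jm|ji]; apply: hab; rewrite ?ji ?orbT // ltnW.
  - by move=> j jm ji; apply: hsep => //; apply: ltnW.
have [emi|nmi] := eqVneq m i0.
  exists z; split => // j; rewrite ltnS leq_eqVlt => /orP[/eqP ->|jm] ji.
    by rewrite emi eqxx in ji.
  exact: bzj.
have [y [ly by0 bym]] := hsep m (ltnSn m) nmi.
have hb0 : absval L (b i0) by apply: hab; rewrite eqxx orbT.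
have hbm : absval L (b m) by apply: hab; rewrite ltnSn.
have hbj j : (j < m)%N -> absval L (b j).
  by move=> jm; apply: hab; rewrite (ltn_trans jm (ltnSn m)).
have ge0 j x : ((j < m.+1)%N || (j == i0)) -> L x -> 0 <= b j x.
  by move=> hj lx; apply: (ab_ge0 hL (hab j hj) lx).
have [bmz|bmz] := leP (b m z) 1.
-
  have [N hN] : exists N, forall j r, (j < m)%N -> (N <= r)%N -> j != i0 ->
      b j z ^+ r * b j y < 1.
    apply: (ev_all (P := fun j r => j != i0 -> b j z ^+ r * b j y < 1)) => j jm.
    have [ji|ji] := eqVneq j i0.
      by exists 0%N => r _ /=.
    have c01 : 0 <= b j z < 1 by rewrite bzj // andbT (ab_ge0 hL (hbj j jm) lz).
    have byp : 0 < b j y + 1.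
      by rewrite ltr_pwDr // (ab_ge0 hL (hbj j jm) ly).
    have e0 : 0 < (b j y + 1)^-1 by rewrite invr_gt0.
    have [N hN] := pow_small c01 e0.
    exists N => r Nr _; have := hN r Nr.
    rewrite -(ltr_pM2r byp) mulVf ?gt_eqF // => h.
    apply: le_lt_trans h; apply: ler_wpM2l; last by rewrite lerDl.
    by rewrite exprn_ge0 // (ab_ge0 hL (hbj j jm) lz).
  exists (z ^+ N * y); split.
  - by apply: (sfM hL) => //; apply: (sfX _ hL).
  - rewrite (abM hL hb0) ?(abX hL hb0) //; last by apply: (sfX _ hL).
    by apply: lt1_mul => //; apply: exprn_ege1; apply: ltW.
  - move=> j; rewrite ltnS leq_eqVlt => /orP[/eqP ->|jm] ji.
      rewrite (abM hL hbm) ?(abX hL hbm) //; last by apply: (sfX _ hL).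
      apply: mul_lt1 => //; rewrite ?exprn_ge0 ?exprn_ile1 //;
        by apply: (ab_ge0 hL hbm).
    rewrite (abM hL (hbj j jm)) ?(abX hL (hbj j jm)) //; last by apply: (sfX _ hL).
    exact: hN.
- have by01 : 0 < b i0 y - 1 by rewrite subr_gt0.
  have bym0 : 0 < 1 - b m y by rewrite subr_gt0.
  have [N1 h1] := pow_large ((b i0 y - 1)^-1) bz0.
  have [N2 h2] := pow_large ((1 - b m y)^-1) bmz.
  have [N3 h3] : exists N, forall j r, (j < m)%N -> (N <= r)%N -> j != i0 ->
      b j z ^+ r < (b j y + 1)^-1.
    apply: (ev_all (P := fun j r => j != i0 -> b j z ^+ r < (b j y + 1)^-1)) => j jm.
    have [ji|ji] := eqVneq j i0.
      by exists 0%N => r _ /=.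
    have c01 : 0 <= b j z < 1 by rewrite bzj // andbT (ab_ge0 hL (hbj j jm) lz).
    have byp : 0 < b j y + 1.
      by rewrite ltr_pwDr // (ab_ge0 hL (hbj j jm) ly).
    have e0 : 0 < (b j y + 1)^-1 by rewrite invr_gt0.
    have [N hN] := pow_small c01 e0.
    by exists N => r Nr _; apply: hN.
  set r := maxn N1 (maxn N2 N3).
  have r1 : (N1 <= r)%N by rewrite leq_maxl.
  have r2 : (N2 <= r)%N by rewrite /r (leq_trans (leq_maxl N2 N3)) // leq_maxr.
  have r3 : (N3 <= r)%N by rewrite /r (leq_trans (leq_maxr N2 N3)) // leq_maxr.
  set w := z ^+ r.
  have lw : L w by apply: (sfX _ hL).
  have l1w : L (1 + w) by apply: (sfD hL) => //; apply: sf1.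
  have Dlow j : (j < m.+1)%N || (j == i0) -> b j w <= b j (1 + w) + 1.
    move=> hj; have := abB hL (hab j hj) lw (sf1 hL).
    by rewrite [w + 1]addrC (ab1 hL (hab j hj)).
  have Dlow2 j : (j < m.+1)%N || (j == i0) -> 1 <= b j (1 + w) + b j w.
    move=> hj; have := abB hL (hab j hj) (sf1 hL) lw.
    by rewrite (ab1 hL (hab j hj)).
  have Dup j : (j < m.+1)%N || (j == i0) -> b j (1 + w) <= 1 + b j w.
    move=> hj; have := abD hL (hab j hj) (sf1 hL) lw.
    by rewrite (ab1 hL (hab j hj)).
  have bw j : (j < m.+1)%N || (j == i0) -> b j w = b j z ^+ r.
    by move=> hj; apply: (abX hL (hab j hj)).
  have hm : (m < m.+1)%N || (m == i0) by rewrite ltnSn.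
  have tm : 1 < b m w * (1 - b m y).
    by rewrite bw // -inv_lt //; apply: h2.
  have nz : 1 + w != 0.
    apply/negP => /eqP e; have := Dlow m hm; rewrite e (ab0 hL hbm).
    have : 1 - b m y <= 1 by rewrite lerBlDr lerDl (ab_ge0 hL hbm ly).
    have : 0 <= b m w by apply: (ab_ge0 hL hbm lw).
    move=> h h' h''; nra.
  have Dpos j : (j < m.+1)%N || (j == i0) -> 0 < b j (1 + w).
    by move=> hj; apply: (ab_gt0 hL (hab j hj) l1w nz).
  have bx j : (j < m.+1)%N || (j == i0) -> b j (w * y / (1 + w)) = b j w * b j y / b j (1 + w).
    move=> hj; rewrite (abdiv hL (hab j hj)) ?(abM hL (hab j hj)) //.
    by apply: (sfM hL).
  exists (w * y / (1 + w)); split.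
  - by apply: (sfdiv hL) => //; apply: (sfM hL).
  - have hi : (i0 < m.+1)%N || (i0 == i0) by rewrite eqxx orbT.
    rewrite bx // ltr_pdivlMr ?Dpos // mul1r.
    have := h1 r r1; rewrite inv_lt // -bw // => ht.
    have := Dup i0 hi; move=> hd; nra.
  - move=> j; rewrite ltnS leq_eqVlt => /orP[/eqP ->|jm] ji.
      rewrite bx // ltr_pdivrMr ?Dpos // mul1r.
      have := Dlow m hm; move=> hd; nra.
    have hj : (j < m.+1)%N || (j == i0) by rewrite (ltn_trans jm (ltnSn m)).
    rewrite bx // ltr_pdivrMr ?Dpos // mul1r.
    have byp : 0 < b j y + 1.
      by rewrite ltr_pwDr // (ab_ge0 hL (hbj j jm) ly).
    have := h3 j r jm r3 ji; rewrite lt_inv // -bw // => ht.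
    have := Dlow2 j hj; move=> hd; nra.
Qed.
End AW.
Section LinDep.

Lemma lin_dep (s : seq algC) (m : nat) (w : nat -> algC) :
  (size s < m)%N ->
  (forall i, (i < m)%N -> exists r : seq algC,
     [/\ size r = size s, all (fun q => q \in Crat) r &
         w i = \sum_(j < size s) r`_j * s`_j]) ->
  exists q : 'I_m -> algC, [/\ forall i, q i \in Crat, exists i, q i != 0 &
     \sum_(i < m) q i * w i = 0].
Proof.
move=> sm hw.
have [r hr] : exists r : nat -> seq algC, forall i, (i < m)%N ->
    [/\ size (r i) = size s, all (fun q => q \in Crat) (r i) &
         w i = \sum_(j < size s) (r i)`_j * s`_j].
  have hP : forall i, exists x : seq algC, (i < m)%N -> [/\ size x = size s,
      all (fun q => q \in Crat) x & w i = \sum_(j < size s) x`_j * s`_j].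
    move=> i; have [im|im] := boolP (i < m)%N; last by exists [::].
    by have [x hx] := hw i im; exists x.
  by have [f hf] := choice hP; exists f.
set n := size s.
pose M : 'M[rat]_(m, n) := \matrix_(i, j) getCrat (r i)`_j.
have nf : ~~ row_free M.
  rewrite /row_free; apply/negP => /eqP hr'.
  by have := rank_leq_col M; rewrite hr' leqNgt sm.
have : kermx M != 0 by rewrite kermx_eq0.
move=> knz.
have [i [j hij]] : exists i j, kermx M i j != 0 by apply/matrix0Pn.
set u := row i (kermx M).
have uM : u *m M = 0 by rewrite -row_mul mulmx_ker row0.
exists (fun k => ratr (u 0 k)); split.
- by move=> k; apply: Crat_rat.
- by exists j; rewrite fmorph_eq0 mxE.
have E k (km : (k < m)%N) (l : 'I_n) : (r k)`_l = ratr (M (Ordinal km) l).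
  rewrite mxE getCratK //; have [_ /all_nthP h _] := hr k km.
  by apply: h; have [-> _ _] := hr k km.
rewrite (eq_bigr (fun k => \sum_(l < n) ratr (u 0 k) * ratr (M k l) * s`_l)); last first.
  move=> k _; have [_ _ ->] := hr k (ltn_ord k); rewrite mulr_sumr.
  apply: eq_bigr => l _; rewrite mulrA; congr (_ * _ * _).
  by rewrite E; congr (ratr (M _ l)); apply: val_inj.
rewrite exchange_big /= big1 // => l _.
rewrite -mulr_suml.
have : (u *m M) 0 l = 0 by rewrite uM mxE.
rewrite mxE => h0.
have -> : \sum_(k < m) ratr (u 0 k) * ratr (M k l) = ratr (\sum_(k < m) u 0 k * M k l) :> algC.
  by rewrite rmorph_sum; apply: eq_bigr => k _; rewrite rmorphM.
by rewrite h0 rmorph0 mul0r.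
Qed.
End LinDep.
Section Finite.
Variable R : realType.

Lemma exists_max (m : nat) (f : 'I_m -> R) (i0 : 'I_m) :
  exists k, forall i, f i <= f k.
Proof.
case: (@arg_maxP _ _ _ i0 predT f isT) => k _ hk.
by exists k => i; apply: hk.
Qed.

Lemma finite_above (N : set algC) (a : algC -> R) :
  number_field N -> absval Qfield a ->
  finite_set [set z | is_place N z /\ exists b, z b /\ abs_equiv Qfield a b].
Proof.
move=> [hN [s [hs hspan]]] ha.
apply: contrapT => inf.
set n := size s; set m := n.+1.
have [B BA cB] := infinite_set_fset m inf.
pose e := enum_fset B.
have ue : uniq e := fset_uniq B.
pose z i := nth set0 e i.
have zB i : (i < m)%N -> [/\ is_place N (z i) & exists b, z i b /\ abs_equiv Qfield a b].
  move=> im; have : [set` B] (z i) by rewrite /= /z mem_nth // (leq_trans im cB).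
  by move/BA => [].
have zinj i j : (i < m)%N -> (j < m)%N -> z i = z j -> i = j.
  move=> im jm; rewrite /z => /eqP; rewrite nth_uniq //; first by move/eqP.
  - exact: leq_trans im cB.
  - exact: leq_trans jm cB.
have [bb hbb] : exists bb : nat -> (algC -> R), forall i, (i < m)%N ->
    z i (bb i) /\ abs_equiv Qfield a (bb i).
  have hP : forall i, exists b : algC -> R, (i < m)%N -> z i b /\ abs_equiv Qfield a b.
    move=> i; have [im|im] := boolP (i < m)%N; last by exists a.
    by have [_ [b hb]] := zB i im; exists b.
  by have [f hf] := choice hP; exists f.
have absb i : (i < m)%N -> absval N (bb i).
  by move=> im; apply: (place_abs (zB i im).1 (hbb i im).1).
have ntb i : (i < m)%N -> nontrivial_abs N (bb i).
  by move=> im; apply: (place_nontriv (zB i im).1 (hbb i im).1).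
have neq i j : (i < m)%N -> (j < m)%N -> i != j -> ~ abs_equiv N (bb i) (bb j).
  move=> im jm ij he; move/eqP: ij; apply; apply: zinj => //.
  exact: (place_eq (zB i im).1 (zB j jm).1 (hbb i im).1 (hbb j jm).1 he).
have [xx hxx] : exists xx : nat -> algC, forall i, (i < m)%N ->
    [/\ N (xx i), 1 < bb i (xx i) & forall j, (j < m)%N -> j != i -> bb j (xx i) < 1].
  have hP : forall i, exists x : algC, (i < m)%N ->
      [/\ N x, 1 < bb i x & forall j, (j < m)%N -> j != i -> bb j x < 1].
    move=> i; have [im|im] := boolP (i < m)%N; last by exists 0.
    have [x hx] : exists x, [/\ N x, 1 < bb i x & forall j, (j < m)%N -> j != i -> bb j x < 1].
      apply: (AW hN).
      - by move=> j /orP[//|/eqP ->]; [exact: absb|exact: absb].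
      - exact (big_elem hN (absb i im) (ntb i im)).
      - move=> j jm ji; apply: (separate hN (absb i im) (absb j jm) (ntb i im) (ntb j jm)).
        by apply: neq => //; rewrite eq_sym.
    by exists x.
  by have [f hf] := choice hP; exists f.
have nx i : (i < m)%N -> N (xx i) by move=> im; case: (hxx i im).
have bx1 i : (i < m)%N -> 1 < bb i (xx i) by move=> im; case: (hxx i im).
have m0 : (0 < m%:R :> R) by rewrite ltr0n.
have [r hr] : exists r, forall i j, (i < m)%N -> (j < m)%N -> j != i ->
    bb j (xx i) ^+ r < m%:R^-1.
  have := ev_all (m := m) (P := fun i r => forall j, (j < m)%N -> j != i ->
      bb j (xx i) ^+ r < m%:R^-1).
  case.
  - move=> i im.
    have := ev_all (m := m) (P := fun j r => j != i -> bb j (xx i) ^+ r < m%:R^-1).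
    case; last by move=> N0 hN0; exists N0 => r Nr j jm ji; apply: hN0.
    move=> j jm; have [ji|ji] := eqVneq j i; first by exists 0%N => r _ /=.
    have [nxi _ hx] := hxx i im.
    have c01 : 0 <= bb j (xx i) < 1.
      by rewrite hx // andbT (ab_ge0 hN (absb j jm) nxi).
    have e0 : 0 < (m%:R : R)^-1 by rewrite invr_gt0.
    have [N0 hN0] := pow_small c01 e0.
    by exists N0 => r Nr _; apply: hN0.
  by move=> N0 hN0; exists N0 => i j im jm ji; apply: hN0.
pose ww i := xx i ^+ r.
have nww i : (i < m)%N -> N (ww i) by move=> im; apply: (sfX _ hN); case: (hxx i im).
have [q [qQ [i0 qi0] qsum]] := lin_dep (w := ww) (ltnSn n) (fun i im => hspan _ (nww i im)).
have [k hk] := exists_max (fun i => a (q i)) i0.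
have QN := sfQ hN.
have aq0 : 0 < a (q i0) by apply: (ab_gt0 sfQQ ha (qQ i0) qi0).
have qk0 : q k != 0.
  apply/eqP => e0; have := hk i0; rewrite e0 (ab0 sfQQ ha) => h.
  by have := lt_le_trans aq0 h; rewrite ltxx.
have [sk [sk0 hsk]] := (hbb k (ltn_ord k)).2.
have hB := absb k (ltn_ord k).
set Bk := bb k.
have Bq i : Bk (q i) <= Bk (q k).
  rewrite /Bk !hsk; [|exact: qQ|exact: qQ].
  apply: (ge0_ler_powR (ltW sk0)).
  - by rewrite nnegrE; apply: (ab_ge0 sfQQ ha (qQ i)).
  - by rewrite nnegrE; apply: (ab_ge0 sfQQ ha (qQ k)).
  - exact: hk.
have Qk0 : 0 < Bk (q k) by apply: (ab_gt0 hN hB (QN _ (qQ k)) qk0).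
set Qk := Bk (q k).
have Nt i : N (q i * ww i) by apply: (sfM hN); [apply: QN; apply: qQ|apply: nww].
rewrite (bigD1 k) //= in qsum.
have ek : q k * ww k = - \sum_(i < m | i != k) q i * ww i.
  by apply/eqP; rewrite -addr_eq0 qsum.
have lhs : Qk <= Bk (q k * ww k).
  have nqk : N (q k) := QN _ (qQ k).
  rewrite /Bk (abM hN hB nqk (nww k (ltn_ord k))) /ww (abX hN hB _ (nx k (ltn_ord k))).
  rewrite -[X in X <= _]mulr1 ler_wpM2l ?(ltW Qk0) // exprn_ege1 //.
  by apply: ltW; apply: bx1.
have rhs : Bk (q k * ww k) <= \sum_(i < m | i != k) Qk / m%:R.
  rewrite /Bk ek (abN hN hB); last by apply: (sfsum _ hN) => i _; apply: Nt.
  apply: le_trans (absum hN hB _ (fun i _ => Nt i)) _.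
  apply: ler_sum => i ik.
  rewrite /Bk (abM hN hB (QN _ (qQ i)) (nww i (ltn_ord i))).
  apply: le_trans (_ : Qk * Bk (ww i) <= _).
    apply: ler_wpM2r; [apply: (ab_ge0 hN hB (nww i (ltn_ord i)))|exact: Bq].
  rewrite ler_wpM2l ?(ltW Qk0) //; apply: ltW.
  rewrite /ww /Bk (abX hN hB _ (nx i (ltn_ord i))).
  by apply: hr => //; rewrite eq_sym.
have tot : \sum_(i < m) Qk / m%:R = Qk.
  by rewrite sumr_const card_ord -[_ *+ m]mulr_natr divfK // gt_eqF.
rewrite (bigD1 k) //= in tot.
have : Qk <= Qk - Qk / m%:R.
  have e2 : \sum_(i < m | i != k) Qk / m%:R = Qk - Qk / m%:R.
    by apply/eqP; rewrite eq_sym subr_eq addrC tot.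
  by apply: le_trans lhs _; rewrite -e2.
move=> h; have : 0 < Qk / m%:R by rewrite divr_gt0.
move: h; set t := Qk / m%:R; lra.
Qed.
End Finite.
Section Compositum.

Lemma nf_intro (K : set algC) (s : seq algC) : is_subfield K ->
  (forall i, (i < size s)%N -> K s`_i) ->
  (forall x, K x -> exists f : nat -> algC, (forall i, f i \in Crat) /\
      x = \sum_(0 <= i < size s) f i * s`_i) -> number_field K.
Proof.
move=> hK hs hx; split => //; exists s; split => // x kx.
have [f [fQ ->]] := hx x kx.
exists (mkseq f (size s)); split; first by rewrite size_mkseq.
- by apply/allP => q /mapP [i _ ->].
- by rewrite big_mkord; apply: eq_bigr => i _; rewrite nth_mkseq.
Qed.

Lemma compositum (K1 K2 : set algC) : number_field K1 -> number_field K2 ->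
  exists N, [/\ number_field N, K1 `<=` N & K2 `<=` N].
Proof.
move=> [hK1 [s1 [hs1 sp1]]] [hK2 [s2 [hs2 sp2]]].
have [Qs [QsC [t ht _]]] := num_field_exists (s1 ++ s2).
pose N := [set x : algC | exists y : Qs, x = QsC y].
have hN : is_subfield N.
  split.
  - by exists 0; rewrite rmorph0.
  - by exists 1; rewrite rmorph1.
  - by move=> x y [x' ->] [y' ->]; exists (x' - y'); rewrite rmorphB.
  - by move=> x y [x' ->] [y' ->]; exists (x' * y'); rewrite rmorphM.
  - by move=> x [x' ->] _; exists x'^-1; rewrite fmorphV.
have inN (K : set algC) (s : seq algC) (sp : forall x, K x -> exists r : seq algC,
      [/\ size r = size s, all (fun q => q \in Crat) r &
          x = \sum_(i < size s) r`_i * s`_i]) :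
    (forall i, (i < size s)%N -> N s`_i) -> K `<=` N.
  move=> hs x kx; have [r [sr rQ ->]] := sp x kx.
  apply: (sfsum _ hN) => i _; apply: (sfM hN); last exact: hs.
  have : r`_i \in Crat by apply: (all_nthP 0 rQ); rewrite sr.
  by move/CratP => [q ->]; exists (ratr q); rewrite fmorph_rat.
have tN i : (i < size (s1 ++ s2))%N -> N (s1 ++ s2)`_i.
  move=> hi; rewrite -ht (nth_map 0); first by exists t`_i.
  by rewrite -(size_map QsC) ht.
exists N; split.
- pose b := vbasis (fullv : {vspace Qs}).
  apply: (nf_intro (s := map QsC b)) => //.
  + move=> i; rewrite size_map => hi; rewrite (nth_map 0) //; by exists b`_i.
  + move=> x [y ->].
    exists (fun j => if insub j is Some i then ratr (coord b i y) else 0); split.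
      by move=> j; case: insub => [i|]; [apply: Crat_rat|apply: rpred0].
    rewrite {1}(coord_vbasis (memvf y)) rmorph_sum size_map size_tuple big_mkord.
    apply: eq_bigr => i _; rewrite rmorphZ_num valK (nth_map 0) //.
    by rewrite size_tuple.
- apply: (inN _ _ sp1) => i hi; have := tN i; rewrite nth_cat hi; apply.
  by rewrite size_cat (leq_trans hi) // leq_addr.
- apply: (inN _ _ sp2) => i hi; have := tN (size s1 + i).
  have h1 : (size s1 + i < size s1)%N = false.
    by rewrite -[X in (_ < X)%N]addn0 ltn_add2l.
  by rewrite nth_cat h1 addKn size_cat ltn_add2l; apply.
Qed.
End Compositum.
Notation Ab N w := [set z | is_place N z /\ place_divides z w].
Section Tower.
Variable R : realType.
Implicit Types (K L N : set algC).


Lemma nontriv_sup K L (b : algC -> R) : K `<=` L -> nontrivial_abs K b ->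
  nontrivial_abs L b.
Proof. by move=> KL [x [kx h]]; exists x; split => //; apply: KL. Qed.

Lemma div_tower K L N (z u w : set (algC -> R)) : K `<=` L -> L `<=` N ->
  is_place N z -> is_place L u -> is_place K w -> place_divides z u ->
  (place_divides z w <-> place_divides u w).
Proof.
move=> KL LN pz pu pw [b [zb ub]]; split.
- move=> [b' [zb' wb']]; exists b; split => //.
  apply: (place_mem pw wb'); first exact: absval_sub KL (place_abs pu ub).
  apply: (equiv_sub (subset_trans KL LN)); exact: place_equiv pz zb' zb.
- move=> [b'' [ub'' wb'']]; exists b; split => //.
  apply: (place_mem pw wb''); first exact: absval_sub KL (place_abs pu ub).
  apply: (equiv_sub KL); exact: place_equiv pu ub'' ub.
Qed.

Lemma restr_exists K L N (z w : set (algC -> R)) : K `<=` L -> L `<=` N ->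
  is_place N z -> is_place K w -> place_divides z w ->
  exists u, [/\ is_place L u, place_divides z u & place_divides u w].
Proof.
move=> KL LN pz pw [b [zb wb]].
have hb : absval L b by apply: absval_sub LN (place_abs pz zb).
have nt : nontrivial_abs L b by apply: nontriv_sup KL (place_nontriv pw wb).
have [pu ub] := cls_place hb nt.
exists (cls L b); split => //; by exists b.
Qed.

Lemma restr_unique L N (z u1 u2 : set (algC -> R)) : L `<=` N ->
  is_place N z -> is_place L u1 -> is_place L u2 ->
  place_divides z u1 -> place_divides z u2 -> u1 = u2.
Proof.
move=> LN pz p1 p2 [b1 [zb1 ub1]] [b2 [zb2 ub2]].
apply: (place_eq p1 p2 ub1 ub2); apply: (equiv_sub LN).
exact: place_equiv pz zb1 zb2.
Qed.

Lemma Ab_finite K N (w : set (algC -> R)) : number_field N -> is_subfield K ->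
  K `<=` N -> is_place K w -> finite_set (Ab N w).
Proof.
move=> nfN hK KN pw; have [a [ha _ ew]] := pw.
have QK := sfQ hK.
apply: sub_finite_set (finite_above nfN (absval_sub QK ha)).
move=> z [pz [b [zb wb]]]; split => //; exists b; split => //.
by move: wb; rewrite ew => -[_ e]; apply: equiv_sub QK e.
Qed.

Lemma tower K L N (v : set (algC -> R)) (g : set (algC -> R) -> R) :
  is_subfield K -> number_field L -> number_field N -> K `<=` L -> L `<=` N ->
  is_place K v ->
  \sum_(u \in Ab L v) \sum_(z \in Ab N u) g z = \sum_(z \in Ab N v) g z.
Proof.
move=> hK nfL nfN KL LN pv.
have KN := subset_trans KL LN.
have fLv := Ab_finite nfL hK KL pv.
have fNv := Ab_finite nfN hK KN pv.
pose f u z := if z \in Ab N u then g z else 0.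
transitivity (\sum_(u \in Ab L v) \sum_(z \in Ab N v) f u z).
  apply: eq_fsbigr => u; rewrite in_setE => -[pu duv].
  rewrite -(fsbig_widen (Ab N u) (Ab N v) (f u)).
  - by apply: eq_fsbigr => z hz; rewrite /f hz.
  - move=> z [pz dzu]; split => //.
    exact: (div_tower KL LN pz pu pv dzu).2 duv.
  - move=> z [_ nz] /=; rewrite /f ifN //; apply/negP; rewrite in_setE; exact: nz.
rewrite exchange_fsbig //; apply: eq_fsbigr => z; rewrite in_setE => -[pz dzv].
have [u0 [pu0 dzu0 du0v]] := restr_exists KL LN pz pv dzv.
rewrite (fsbigD1 u0 _ _ fLv (conj pu0 du0v)) /=.
have -> : \sum_(j \in Ab L v `\ u0) f j z = 0.
  apply: fsbig1 => u [[pu duv] neq]; rewrite /f ifN //; apply/negP.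
  rewrite in_setE => -[_ dzu].
  by apply: neq; apply: (restr_unique LN pz pu pu0 dzu dzu0).
by rewrite addr0 /f ifT // in_setE.
Qed.
End Tower.
Section Main.
Variable R : realType.
Variables (S : set (set (algC -> R))) (F : set algC).
Hypotheses (hS : forall v, S v -> is_place Qfield v) (nfF : number_field F).

Lemma ext_eq F0 S0 (c : JFS F0 S0 -> R) K w (h : inJ F0 S0 (K, w)) :
  extJ c K w = c (exist _ (K, w) h).
Proof. rewrite /extJ; case: pselect => [h'|//]; by rewrite (Prop_irrelevance h' h). Qed.

Lemma inQS_of L u : inJ F (M_ F S) (L, u) -> inJ Qfield S (L, u).
Proof using hS nfF.
move=> [nfL FL [pu [v' [[pv' [v [Sv dv'v]]] duv']]]].
split => //; first exact: sfQ nfL.1.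
split => //; exists v; split => //.
exact: (div_tower (sfQ nfF.1) FL pu pv' (hS Sv) duv').2 dv'v.
Qed.

Lemma inFT_of L u : number_field L -> F `<=` L -> inJ Qfield S (L, u) ->
  inJ F (M_ F S) (L, u).
Proof using hS nfF.
move=> nfL FL [_ _ [pu [v [Sv duv]]]].
have [v' [pv' duv' dv'v]] := restr_exists (sfQ nfF.1) FL pu (hS Sv) duv.
split => //; split => //; exists v'; split => //; split => //.
by exists v.
Qed.

Lemma inQS_down K v N w : inJ Qfield S (K, v) -> number_field N -> K `<=` N ->
  is_place N w -> place_divides w v -> inJ Qfield S (N, w).
Proof using hS.
move=> [nfK _ [pv [s [Ss dvs]]]] nfN KN pw dwv.
split => //; first exact: sfQ nfN.1.
split => //; exists s; split => //.
exact: (div_tower (sfQ nfK.1) KN pw pv (hS Ss) dwv).2 dvs.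
Qed.
End Main.

Unset Implicit Arguments.
Theorem theorem5p2 (R : realType) (S : set (set (algC -> R))) (F : set algC) :
  (forall v, S v -> is_place Qfield v) -> S !=set0 -> number_field F ->
  let rho := @rho_restrict R S F in
  [/\ (* rho maps J*(Q,S) into J*(F,T), T = M_F(S) *)
      (forall c, consistent c -> consistent (rho c)),
      (* rho is linear *)
      (forall (a : R) (c1 c2 : JFS Qfield S -> R),
          rho (fun x => a * c1 x + c2 x) = (fun y => a * rho c1 y + rho c2 y)),
      (* injective on J*(Q,S) *)
      (forall c1 c2, consistent c1 -> consistent c2 -> rho c1 = rho c2 -> c1 = c2) &
      (* surjective onto J*(F,T) *)
      (forall d : JFS F (M_ F S) -> R, consistent d ->
          exists c, consistent c /\ rho c = d)].
Proof.
move=> hS _ nfF rho.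
split.
- move=> c cc [[K w0] hx] L nfL KL /=.
  rewrite /rho /rho_restrict /=.
  have hq := inQS_of hS nfF hx.
  have [_ FK _] := hx.
  rewrite (ext_eq c hq) (cc (exist _ (K, w0) hq) L nfL KL) /=.
  apply: eq_fsbigr => u; rewrite in_setE => -[pu duw].
  have hu := inFT_of hS nfF nfL (subset_trans FK KL) (inQS_down hS hq nfL KL pu duw).
  by rewrite (ext_eq (rho_restrict c) hu) /rho_restrict /=.
- move=> a c1 c2; apply: funext => y; rewrite /rho /rho_restrict /extJ.
  by case: pselect => _ //; rewrite mulr0 addr0.
- move=> c1 c2 cc1 cc2 heq; apply: funext => -[[K v] hx].
  have [nfK _ _] := hx; have [N [nfN KN FN]] := compositum nfK nfF.
  rewrite (cc1 (exist _ (K, v) hx) N nfN KN) (cc2 (exist _ (K, v) hx) N nfN KN) /=.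
  apply: eq_fsbigr => w; rewrite in_setE => -[pw dwv].
  have hq := inQS_down hS hx nfN KN pw dwv.
  have hf := inFT_of hS nfF nfN FN hq.
  have := congr1 (fun f => f (exist _ (N, w) hf)) heq.
  by rewrite /rho /rho_restrict /=.
- move=> d cd.
  have [M hM] : exists M : set algC -> set algC, forall K, number_field K ->
      [/\ number_field (M K), K `<=` M K & F `<=` M K].
    have hP : forall K : set algC, exists N : set algC, number_field K ->
        [/\ number_field N, K `<=` N & F `<=` N].
      move=> K; case: (pselect (number_field K)) => nfK; last by exists K.
      by have [N hN] := compositum nfK nfF; exists N.
    by have [f hf] := choice hP; exists f.
  pose c := fun x : JFS Qfield S =>
    \sum_(w \in [set w | is_place (M (sval x).1) w /\ place_divides w (sval x).2])
       extJ d (M (sval x).1) w.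
  have dcons : forall L w N, inJ F (M_ F S) (L, w) -> number_field N -> L `<=` N ->
      extJ d L w = \sum_(z \in [set z | is_place N z /\ place_divides z w]) extJ d N z.
    by move=> L w N h nfN LN; rewrite (ext_eq d h); apply: (cd (exist _ (L, w) h) N nfN LN).
  exists c; split.
  + move=> [[K v] hx] L nfL KL /=.
    have [nfK _ [pv _]] := hx.
    have [nfMK KMK FMK] := hM K nfK; have [nfML LML FML] := hM L nfL.
    have [N [nfN MKN MLN]] := compositum nfMK nfML.
    transitivity (\sum_(z \in [set z | is_place N z /\ place_divides z v]) extJ d N z).
      rewrite /c /= -(tower (extJ d N) nfK.1 nfMK nfN KMK MKN pv).
      apply: eq_fsbigr => w; rewrite in_setE => -[pw dwv].
      apply: dcons => //.
      exact (inFT_of hS nfF nfMK FMK (inQS_down hS hx nfMK KMK pw dwv)).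
    rewrite -(tower (extJ d N) nfK.1 nfL nfN KL (subset_trans LML MLN) pv).
    apply: eq_fsbigr => u; rewrite in_setE => -[pu duv].
    have hu := inQS_down hS hx nfL KL pu duv.
    rewrite (ext_eq c hu) /c /= -(tower (extJ d N) nfL.1 nfML nfN LML MLN pu).
    apply: eq_fsbigr => w; rewrite in_setE => -[pw dwu].
    symmetry; apply: dcons => //.
    exact (inFT_of hS nfF nfML FML (inQS_down hS hu nfML LML pw dwu)).
  + apply: funext => -[[L w] hy]; rewrite /rho /rho_restrict /=.
    have hq := inQS_of hS nfF hy.
    rewrite (ext_eq c hq) /c /=.
    have [nfL FL _] := hy; have [nfML LML _] := hM L nfL.
    by rewrite (cd (exist _ (L, w) hy) (M L) nfML LML).
Qed.
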